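(* Let $\tau$ be any substitution whose ll and rl graphs are subfixed. Then \[\mathcal{L}_2(\tau)=\{u\in\mathcal{A}^2 : \exists a\in\mathcal{A},\ u \text{ is a factor of } \tau(a)\}\cup\{u\in\mathcal{A}^2 : \exists a\in\mathcal{A},\ u \text{ is a factor of } \tau^2(a)\}.\]
   Context: Let $\mathcal{A}$ be a finite nonempty alphabet, $\mathcal{A}^2$ the set of words of length $2$. A word $u$ is a factor of $v$ if $v=w_1uw_2$ for some words $w_1,w_2$. A substitution is a map $\tau:\mathcal{A}\to\mathcal{A}^+$ (nonempty words), extended to a concatenation-respecting map on words. The language $\mathcal{L}(\tau)$ is the set of words that are factors of $\tau^n(a)$ for some letter $a$ and some $n\ge1$, and $\mathcal{L}_2(\tau)$ is its set of words of length $2$. The ll graph (resp. rl graph) is the directed graph on vertex set $\mathcal{A}$ with exactly one edge from each letter $a$ to the leftmost (resp. rightmost) letter of $\tau(a)$. Such a graph is subfixed if for every vertex $x$, either the edge leaving $x$ goes to $x$, or it goes to a vertex $y$ whose outgoing edge goes to $y$ itself. *)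

(* Defs.v *)
From mathcomp Require Import all_boot.
Set Implicit Arguments. Unset Strict Implicit. Unset Printing Implicit Defensive.

(* A substitution on the alphabet A is a map tau : A -> seq A whose images
   are nonempty (hypothesis stated separately); extended to words by
   concatenation. *)
Definition subst_word (A : Type) (tau : A -> seq A) (w : seq A) : seq A :=
  flatten (map tau w).

Definition subst_iter (A : Type) (tau : A -> seq A) (n : nat) (w : seq A) :=
  iter n (subst_word tau) w.

Definition factor (A : eqType) (u v : seq A) : bool := infix u v.

Definition in_lang (A : eqType) (tau : A -> seq A) (u : seq A) : Prop :=
  exists (a : A) (n : nat), 1 <= n /\ factor u (subst_iter tau n [:: a]).

Definition in_lang2 (A : eqType) (tau : A -> seq A) (u : seq A) : Prop :=
  size u = 2 /\ in_lang tau u.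

(* ll / rl graphs: edge a -> leftmost / rightmost letter of tau a *)
Definition ll_edge (A : Type) (tau : A -> seq A) (a : A) : A := head a (tau a).
Definition rl_edge (A : Type) (tau : A -> seq A) (a : A) : A := last a (tau a).

Definition subfixed (A : eqType) (f : A -> A) : Prop :=
  forall x : A, f x = x \/ f (f x) = f x.

(* Main.v *)
Require Import Defs.
From mathcomp Require Import all_boot.
Set Implicit Arguments.

Section S.
Variable A : eqType.
Implicit Types (s l r : seq A).

Definition adj (p q : A) s := exists l r, s = l ++ p :: q :: r.

Lemma adjE p q s : adj p q s <-> infix [:: p; q] s.
Proof.
split.
  by move=> [l [r ->]]; apply/infixP; exists l, r.
by move=> /infixP [l [r ->]]; exists l, r.
Qed.

Lemma adj_cat p q s1 s2 : adj p q (s1 ++ s2) ->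
  adj p q s1 \/ adj p q s2 \/ (exists l r, s1 = rcons l p /\ s2 = q :: r).
Proof.
move=> [l [r E]]; elim: l s1 E => [|x l IH] [|y s1] /=.
- by move=> E; right; left; exists [::], r.
- case=> -> E; case: s1 E => [|z s1] /=.
    by move=> ->; right; right; exists [::], r.
  by case=> -> _; left; exists [::], s1.
- by move=> E; right; left; exists (x :: l), r.
- case=> -> /IH [[l1 [r1 ->]]|[H|[l1 [r1 [-> ->]]]]].
  + by left; exists (x :: l1), r1.
  + by right; left.
  + by right; right; exists (x :: l1), r1.
Qed.

Variable tau : A -> seq A.
Hypothesis tne : forall a, tau a != [::].

Lemma sw_cons x w : subst_word tau (x :: w) = tau x ++ subst_word tau w.
Proof. by []. Qed.

Lemma step p q w : adj p q (subst_word tau w) ->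
  (exists c, c \in w /\ adj p q (tau c)) \/
  (exists c d, adj c d w /\ p = rl_edge tau c /\ q = ll_edge tau d).
Proof.
elim: w => [|x w IH]; first by move=> [l [r]]; case: l.
rewrite sw_cons => /adj_cat [H|[/IH [[c [cw H]]|[c [d [[l [r ->]] [-> ->]]]]]|[l [r [E1 E2]]]]].
- by left; exists x; rewrite mem_head.
- by left; exists c; rewrite in_cons cw orbT.
- by right; exists c, d; split=> //; exists (x :: l), r.
- right; case: w E2 IH => [|y w] E2 IH.
    by move: E2; rewrite /subst_word.
  exists x, y; split; first by exists [::], w.
  rewrite /rl_edge /ll_edge E1 last_rcons; split=> //.
  move: E2; rewrite sw_cons; have := tne y.
  by case: (tau y) => [|z s] //= _ [->].
Qed.

Lemma sw_cat w1 w2 : subst_word tau (w1 ++ w2) = subst_word tau w1 ++ subst_word tau w2.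
Proof. by rewrite /subst_word map_cat flatten_cat. Qed.

Lemma step_back c d w : adj c d w -> adj (rl_edge tau c) (ll_edge tau d) (subst_word tau w).
Proof.
move=> [l [r ->]]; rewrite sw_cat !sw_cons /rl_edge /ll_edge.
case Ec: (tau c) (tne c) => [|y s] // _.
case Ed: (tau d) (tne d) => [|z s2] // _ /=.
exists (subst_word tau l ++ belast y s), (s2 ++ subst_word tau r).
rewrite -catA; congr (_ ++ _).
by rewrite -cat_cons lastI cat_rcons.
Qed.

End S.
Arguments adj {A}.

Theorem mainTheorem11 (A : finType) (tau : A -> seq A) :
  0 < #|A| ->
  (forall a : A, tau a != [::]) ->
  subfixed (ll_edge tau) ->
  subfixed (rl_edge tau) ->
  forall u : seq A,
    in_lang2 tau u <->
    (size u = 2 /\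
     ((exists a : A, factor u (tau a)) \/
      (exists a : A, factor u (subst_iter tau 2 [:: a])))).
Proof.
move=> _ tne sll srl u.
have idem : forall f : A -> A, subfixed f -> forall x, f (f x) = f x.
  by move=> f sf x; case: (sf x) => E //; rewrite !E.
have sw1 : forall a, subst_word tau [:: a] = tau a.
  by move=> a; rewrite /subst_word /= cats0.
split.
- move=> [su [a [n [n1 F]]]]; split=> //.
  case: u su F => [|p [|q [|]]] // _ F.
  have key : forall n (p q : A), 1 <= n -> adj p q (subst_iter tau n [:: a]) ->
     (exists b, adj p q (tau b)) \/
     (exists b c d, adj c d (tau b) /\ p = rl_edge tau c /\ q = ll_edge tau d).
    elim=> [|[|m] IH] p' q' // _.
      by rewrite /subst_iter /= sw1 => H; left; exists a.
    rewrite /subst_iter iterS -/(subst_iter tau m.+1 [:: a]).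
    move=> /(@step _ tau tne) [[c [_ H]]|[c [d [H [-> ->]]]]]; first by left; exists c.
    case: (IH c d erefl H) => [[b Hb]|[b [e [f [Hb [-> ->]]]]]].
      by right; exists b, c, d.
    by right; exists b, e, f; rewrite !idem.
  case: (key n p q n1 (proj2 (adjE _ _ _ _) F)) => [[b Hb]|[b [c [d [H [-> ->]]]]]].
    by left; exists b; apply/adjE.
  right; exists b; apply/adjE; rewrite /subst_iter /= sw1.
  exact: (@step_back _ tau tne).
- move=> [su [[a H]|[a H]]]; split=> //; exists a.
    by exists 1; split=> //; rewrite /subst_iter /= sw1.
  by exists 2.
Qed.
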